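(* Let $X,Y$ be finite sets. If $A\in\mathbb{Z}^{X\times Y}$ has only nonnegative entries, then $$\operatorname{block}(A)\le\max_{x\in X}\sum_{y\in Y}|A(x,y)| .$$ More generally, every $A\in\mathbb{Z}^{X\times Y}$ satisfies $$\operatorname{block}(A)\le 2\max_{x\in X}\sum_{y\in Y}|A(x,y)| .$$
   Context: A boolean matrix $B\in\{0,1\}^{X\times Y}$ is blocky if there exist families $\{S_i\}$ of pairwise disjoint subsets of $X$ and $\{T_i\}$ of pairwise disjoint subsets of $Y$ such that the support of $B$ equals $\bigcup_i S_i\times T_i$. The block complexity $\operatorname{block}(A)$ of an integer matrix $A$ is the smallest $L\ge0$ such that $A=\sum_{i=1}^L\sigma_iB_i$ with blocky $B_i$ and signs $\sigma_i\in\{-1,1\}$. *)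

(* Defs.v *)
From mathcomp Require Import all_boot all_order all_algebra.
Set Implicit Arguments. Unset Strict Implicit. Unset Printing Implicit Defensive.
Import GRing.Theory Num.Theory.

(* A boolean matrix B is blocky if there are families (S_i)_i of pairwise
   disjoint subsets of X and (T_i)_i of pairwise disjoint subsets of Y
   (given as a finite list of pairs (S_i, T_i)) such that
   supp B = \bigcup_i S_i x T_i. *)
Definition blocky (X Y : finType) (B : X -> Y -> bool) : Prop :=
  exists F : seq ({set X} * {set Y}),
    (forall i j, (i < size F)%N -> (j < size F)%N -> i != j ->
        [disjoint (nth (set0, set0) F i).1 & (nth (set0, set0) F j).1]
        /\ [disjoint (nth (set0, set0) F i).2 & (nth (set0, set0) F j).2])
    /\ (forall x y, B x y = has (fun p : {set X} * {set Y} => (x \in p.1) && (y \in p.2)) F).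

Definition block_decomposable (X Y : finType) (A : X -> Y -> int) (L : nat) : Prop :=
  exists (B : 'I_L -> X -> Y -> bool) (sigma : 'I_L -> bool),
    (forall i, blocky (B i)) /\
    (forall x y, A x y = (\sum_(i < L) (-1) ^+ sigma i * (B i x y)%:Z)%R).

(* block(A) <= N  (block(A) is the least L with a decomposition). *)
Definition block_le (X Y : finType) (A : X -> Y -> int) (N : nat) : Prop :=
  exists L, (L <= N)%N /\ block_decomposable A L.

Definition max_row_l1 (X Y : finType) (A : X -> Y -> int) : nat :=
  \max_(x : X) \sum_(y : Y) `|A x y|%N.

(* Main.v *)
Require Import Defs.
From mathcomp Require Import all_boot all_order all_algebra.
Import GRing.Theory Num.Theory.

Lemma blocky_row (X Y : finType) (B : X -> Y -> bool) :
  (forall x y y', B x y -> B x y' -> y = y') -> blocky B.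
Proof.
move=> Hu.
exists [seq ([set x | B x z], [set z]) | z <- enum Y]; split.
  move=> i j; rewrite size_map => Hi Hj Hij.
  have y0 : Y by move: Hi; case: (enum Y) => [|a l] // _; exact: a.
  rewrite !(nth_map y0) -?enumT //.
  have Hne : nth y0 (enum Y) i != nth y0 (enum Y) j.
    by rewrite nth_uniq ?enum_uniq.
  move: Hne; set a := nth y0 (enum Y) i; set b := nth y0 (enum Y) j => Hne.
  split; apply/pred0P => x /=; rewrite !inE.
    apply/negP => /andP [H1 H2]; move/eqP: Hne; apply; exact: Hu H1 H2.
  apply/negP => /andP [/eqP H1 /eqP H2]; move/eqP: Hne; apply; by rewrite -H1 -H2.
move=> x y; rewrite has_map; apply/idP/hasP.
  by move=> Hb; exists y; rewrite ?mem_enum //= !inE eqxx andbT.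
by move=> [z _] /=; rewrite !inE => /andP [H /eqP ->].
Qed.

Definition rowseq (X Y : finType) (P : X -> Y -> nat) (x : X) : seq Y :=
  flatten [seq nseq (P x z) z | z <- enum Y].
Arguments rowseq {X Y}.

Lemma count_rowseq (X Y : finType) (P : X -> Y -> nat) x (a : pred Y) :
  count a (rowseq P x) = \sum_(z | a z) P x z.
Proof.
rewrite /rowseq count_flatten -map_comp sumnE big_map big_enum /=.
rewrite [RHS]big_mkcond /=; apply: eq_bigr => z _.
by rewrite count_nseq; case: (a z); rewrite ?mul1n ?mul0n.
Qed.

Lemma core (X Y : finType) (P : X -> Y -> nat) (M : nat) :
  (forall x, \sum_y P x y <= M) ->
  exists B : 'I_M -> X -> Y -> bool,
    (forall k, blocky (B k)) /\ forall x y, \sum_(k < M) B k x y = P x y.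
Proof.
move=> HM.
exists (fun k x y => (k < size (rowseq P x)) && (nth y (rowseq P x) k == y)); split.
  move=> k; apply: blocky_row => x y y' /andP [Hk /eqP H1] /andP [_ /eqP H2].
  by rewrite -H1 -H2 (set_nth_default y').
move=> x y.
have Hs : size (rowseq P x) <= M by rewrite -count_predT count_rowseq.
set s := rowseq P x.
have -> : P x y = count (pred1 y) s by rewrite count_rowseq big_pred1_eq.
transitivity (\sum_(k < M | k < size s) ((nth y s k == y) : nat)).
  rewrite [RHS]big_mkcond; apply: eq_bigr => k _; by case: ifP.
rewrite -(big_ord_widen M (fun k => ((nth y s k == y) : nat))) //.
rewrite -sum1_count big_mkcond (big_nth y) big_mkord.
rewrite [RHS]big_mkcond; apply: eq_bigr => i _ /=; by case: eqP.
Qed.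

Lemma dec_nat (X Y : finType) (P : X -> Y -> nat) (M : nat) (b : bool) :
  (forall x, \sum_y P x y <= M) ->
  exists B : 'I_M -> X -> Y -> bool,
    (forall k, blocky (B k)) /\
    forall x y, ((-1) ^+ b * (P x y)%:Z = \sum_(k < M) (-1) ^+ b * (B k x y)%:Z)%R.
Proof.
move=> /core [B [HB Hs]]; exists B; split => // x y.
by rewrite -mulr_sumr -(big_morph Posz PoszD (erefl _)) Hs.
Qed.

Lemma dec_comb (X Y : finType) (A : X -> Y -> int) (P N : X -> Y -> nat) (M : nat) :
  (forall x, \sum_y P x y <= M) -> (forall x, \sum_y N x y <= M) ->
  (forall x y, A x y = (P x y)%:Z - (N x y)%:Z)%R ->
  block_decomposable A (M + M).
Proof.
move=> /(@dec_nat _ _ _ _ false) [B1 [H1 E1]] /(@dec_nat _ _ _ _ true) [B2 [H2 E2]] E.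
exists (fun k => match split k with inl i => B1 i | inr j => B2 j end).
exists (fun k => match split k with inl _ => false | inr _ => true end).
split.
  by move=> k; case: (split k).
move=> x y; rewrite big_split_ord /= E.
have := E1 x y; rewrite expr0 mul1r => ->.
have := E2 x y; rewrite expr1 mulN1r => /(canRL (@opprK _)) ->.
congr (_ + _)%R.
  apply: congr_big => // i _; by rewrite (unsplitK (inl i)).
rewrite opprK; apply: congr_big => // i _; by rewrite (unsplitK (inr i)).
Qed.

Theorem lemma4p1 (X Y : finType) (A : X -> Y -> int) :
  ((forall x y, (0 <= A x y)%R) -> block_le A (max_row_l1 A))
  /\ block_le A (2 * max_row_l1 A).
Proof.
have Hrow : forall x, \sum_y `|A x y|%N <= max_row_l1 A.
  by move=> x; rewrite /max_row_l1; exact: (leq_bigmax (F := fun x => \sum_y `|A x y|%N)).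
split.
  move=> Hpos; exists (max_row_l1 A); split => //.
  have [B [HB E]] := @dec_nat _ _ _ _ false Hrow.
  exists B, (fun _ => false); split => // x y.
  by rewrite -E expr0 mul1r abszE ger0_norm.
exists (max_row_l1 A + max_row_l1 A); split; first by rewrite mul2n addnn.
apply: (@dec_comb _ _ _ (fun x y => if (0 <= A x y)%R then `|A x y|%N else 0)
                 (fun x y => if (A x y < 0)%R then `|A x y|%N else 0)).
- move=> x; apply: leq_trans (Hrow x); apply: leq_sum => y _; by case: ifP.
- move=> x; apply: leq_trans (Hrow x); apply: leq_sum => y _; by case: ifP.
- move=> x y; case: (lerP 0 (A x y)) => H.
    by rewrite subr0 abszE ger0_norm.
  by rewrite sub0r abszE ltr0_norm // opprK.
Qed.
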